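(* Let $\rho:\mathbb{Z}\to[0,\infty)$ be a weight with finite moments, $f,g$ polynomials with $\deg f\le2$, $\deg g\le1$, $f(x+1)\rho(x+1)-f(x)\rho(x)=g(x)\rho(x)$ on $\mathbb{Z}$, and $\rho f$ vanishing at the end points of the support of $\rho$. Let $\{p_n\}$ be the monic orthogonal polynomials for $\rho$ with $\sum_xp_mp_n\rho=h_n\delta_{nm}$, $h_n>0$; let $\mathcal{A}_{\rm l}=g(x)T+f(x)(\Delta+\nabla)$, $c_n:=-\sum_xp_{n+1}(x)(\mathcal{A}_{\rm l}p_n)(x)\rho(x)$, $\omega(x)=f(x+1)\rho(x+1)$, and assume the Pfaffians $\mathrm{Pf}[\sum_x(x^i(x+1)^j-(x+1)^ix^j)\omega(x)]_{i,j=0}^{2n-1}$ are nonzero for all $n\ge1$. Let $Q_{2n+1}=p_{2n+1}$, $Q_{2n}=\sum_{l=0}^n\big(\prod_{j=l}^{n-1}c_{2j+1}/c_{2j}\big)p_{2l}$, $u_n=c_{2n}$, and for $N\ge1$ $$S_N(x,y)=\sum_{i=0}^{N-1}\frac{1}{u_i}\big(Q_{2i}(x)Q_{2i+1}(y)-Q_{2i}(y)Q_{2i+1}(x)\big).$$ Then, with $t_{2N,2N-2}:=-c_{2N-1}/c_{2N-2}$, $$\sum_{m=0}^{N-1}\frac{p_{2m}(x)p_{2m}(y)}{h_{2m}}+\sum_{m=0}^{N-1}\frac{p_{2m+1}(x)p_{2m+1}(y)}{h_{2m+1}}=\mathcal{A}^{(y)}_{\rm l}S_N(x,y)-\frac{t_{2N,2N-2}}{h_{2N}}p_{2N}(y)Q_{2N-2}(x),$$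 where $\mathcal{A}^{(y)}_{\rm l}$ denotes $\mathcal{A}_{\rm l}$ acting in the variable $y$.
   Context: $T\phi(x)=\phi(x+1)$, $\Delta\phi(x)=\phi(x+1)-\phi(x)$, $\nabla\phi(x)=\phi(x)-\phi(x-1)$. *)

(* Defs.v *)
From HB Require Import structures.
From mathcomp Require Import all_boot all_order all_algebra all_fingroup.
From mathcomp Require Import all_classical all_reals all_analysis.
From mathcomp Require Import zify.
Set Implicit Arguments. Unset Strict Implicit. Unset Printing Implicit Defensive.
Import Order.TTheory GRing.Theory Num.Theory numFieldNormedType.Exports.
Local Open Scope ring_scope.

Section Defs.
Variable R : realType.

Definition zsummable (F : int -> R) : Prop :=
  cvgn (series (fun k : nat => `|F k%:Z|)) /\
  cvgn (series (fun k : nat => `|F (- (k.+1)%:Z)|)).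

Definition zsum (F : int -> R) : R :=
  limn (series (fun k : nat => F k%:Z)) +
  limn (series (fun k : nat => F (- (k.+1)%:Z))).

Definition finite_moments (rho : int -> R) : Prop :=
  forall k : nat, zsummable (fun x => (x%:~R) ^+ k * rho x).

Definition Al (f g : {poly R}) (phi : R -> R) (x : R) : R :=
  g.[x] * phi (x + 1) + f.[x] * ((phi (x + 1) - phi x) + (phi x - phi (x - 1))).

Lemma pf_ord_proof (n : nat) (i : 'I_n) (b : bool) : (i.*2 + b < n.*2)%N.
Proof. have := ltn_ord i; case: b => /=; lia. Qed.

Definition pf_idx (n : nat) (i : 'I_n) (b : bool) : 'I_(n.*2) :=
  Ordinal (pf_ord_proof i b).

Definition pfaffian (n : nat) (A : 'M[R]_(n.*2)) : R :=
  ((2 ^ n * n`!)%:R)^-1 *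
  \sum_(s : 'S_(n.*2)) (-1) ^+ s *
     \prod_(i < n) A (s (pf_idx i false)) (s (pf_idx i true)).

Definition skew_moment_mx (omega : int -> R) (n : nat) : 'M[R]_(n.*2) :=
  \matrix_(i < n.*2, j < n.*2)
     zsum (fun x => ((x%:~R) ^+ i * (x%:~R + 1) ^+ j
                     - (x%:~R + 1) ^+ i * (x%:~R) ^+ j) * omega x).

Definition is_left_endpoint (rho : int -> R) (a : int) : Prop :=
  rho a != 0 /\ forall y : int, y < a -> rho y = 0.
Definition is_right_endpoint (rho : int -> R) (b : int) : Prop :=
  rho b != 0 /\ forall y : int, b < y -> rho y = 0.

End Defs.

(* Main.v *)
Require Import Defs.
From HB Require Import structures.
From mathcomp Require Import all_boot all_order all_algebra all_fingroup.
From mathcomp Require Import all_classical all_reals all_analysis.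
From mathcomp Require Import ring lra polyrcf zify.
Import Order.TTheory GRing.Theory Num.Theory numFieldNormedType.Exports.
Local Open Scope classical_set_scope.
Local Open Scope ring_scope.
Set Implicit Arguments. Unset Strict Implicit.
Section ZS.
Variable R : realType.
Implicit Types F G : int -> R.

Lemma zsummable_le F G : zsummable G -> (forall x, `|F x| <= `|G x|) -> zsummable F.
Proof.
move=> [h1 h2] le; split.
  by apply: (series_le_cvg _ _ _ h1) => n //; apply: le.
by apply: (series_le_cvg _ _ _ h2) => n //; apply: le.
Qed.

Lemma zsummableD F G : zsummable F -> zsummable G -> zsummable (fun x => F x + G x).
Proof.
move=> [f1 f2] [g1 g2]; split.
  apply: (series_le_cvg (v_ := fun k => `|F k%:Z| + `|G k%:Z|)).
  - by move=> n.
  - by move=> n; rewrite addr_ge0.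
  - by move=> n; apply: ler_normD.
  - exact: (is_cvg_seriesD f1 g1).
apply: (series_le_cvg (v_ := fun k => `|F (- (k.+1)%:Z)| + `|G (- (k.+1)%:Z)|)).
- by move=> n.
- by move=> n; rewrite addr_ge0.
- by move=> n; apply: ler_normD.
- exact: (is_cvg_seriesD f2 g2).
Qed.

Lemma zsummableZ a F : zsummable F -> zsummable (fun x => a * F x).
Proof.
move=> [f1 f2]; split.
  apply: (series_le_cvg (v_ := fun k => `|a| * `|F k%:Z|)).
  - by move=> n.
  - by move=> n; rewrite mulr_ge0.
  - by move=> n; rewrite normrM.
  - exact: (is_cvg_seriesZ (k := `|a|) f1).
apply: (series_le_cvg (v_ := fun k => `|a| * `|F (- (k.+1)%:Z)|)).
- by move=> n.
- by move=> n; rewrite mulr_ge0.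
- by move=> n; rewrite normrM.
- exact: (is_cvg_seriesZ (k := `|a|) f2).
Qed.

Lemma zsummable0 : zsummable (fun _ => 0 : R).
Proof.
split; apply: (series_le_cvg (v_ := fun _ => 0)) => //; rewrite ?normr0 //;
  (have -> : series (fun=> (0:R)) = fun=> 0 by apply/funext => n; rewrite /series /= big1);
  exact: is_cvg_cst.
Qed.

Lemma zsum_ext F G : (forall x, F x = G x) -> zsum F = zsum G.
Proof. by move=> e; have -> : F = G by apply/funext. Qed.

Lemma zsum0 : zsum (fun _ => 0 : R) = 0.
Proof.
rewrite /zsum; have -> : series (fun=> (0:R)) = fun=> 0.
  by apply/funext => n; rewrite /series /= big1.
have -> : limn (fun=> (0:R)) = 0 by apply: cvg_lim => //; exact: cvg_cst.
by rewrite addr0.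
Qed.

Lemma zsumD F G : zsummable F -> zsummable G -> zsum (fun x => F x + G x) = zsum F + zsum G.
Proof.
move=> [f1 f2] [g1 g2]; rewrite /zsum.
rewrite (lim_seriesD (normed_cvg f1) (normed_cvg g1)).
rewrite (lim_seriesD (normed_cvg f2) (normed_cvg g2)).
by rewrite addrACA.
Qed.

Lemma zsumZ a F : zsummable F -> zsum (fun x => a * F x) = a * zsum F.
Proof.
move=> [f1 f2]; rewrite /zsum.
rewrite (lim_seriesZ a (normed_cvg f1)) (lim_seriesZ a (normed_cvg f2)).
by rewrite mulrDr.
Qed.

Lemma zsummable_null F : zsummable F ->
  (fun n : nat => F n%:Z) @ \oo --> 0 /\ (fun n : nat => F (- n%:Z)) @ \oo --> 0.
Proof.
move=> [f1 f2]; split.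
  by apply/norm_cvg0P; apply: cvg_series_cvg_0.
apply/norm_cvg0P; rewrite -cvg_shiftS /=.
exact: cvg_series_cvg_0.
Qed.

End ZS.
Lemma zsum_telescope (R : realType) (K : int -> R) :
  (fun n : nat => K n%:Z) @ \oo --> 0 -> (fun n : nat => K (- n%:Z)) @ \oo --> 0 ->
  zsum (fun x => K (x + 1) - K x) = 0.
Proof.
move=> h1 h2; rewrite /zsum.
have e1 : series (fun k : nat => K (k%:Z + 1) - K k%:Z) = (fun n => K n%:Z - K 0).
  apply/funext => n; rewrite seriesEnat /=.
  rewrite -(telescope_sumr (fun k : nat => K k%:Z)) //.
  by apply: eq_bigr => k _; rewrite -addn1 PoszD.
have e2 : series (fun k : nat => K (- (k.+1)%:Z + 1) - K (- (k.+1)%:Z))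
          = (fun n => K 0 - K (- n%:Z)).
  apply/funext => n; rewrite seriesEnat /=.
  have := @telescope_sumr _ 0%N n (fun k : nat => - K (- k%:Z)) (leq0n n).
  rewrite /= oppr0 opprK addrC => <-.
  apply: eq_bigr => k _; rewrite opprK addrC.
  by rewrite -addn1 PoszD opprD addrNK.
rewrite e1 e2.
have -> : limn (fun n : nat => K n%:Z - K 0) = 0 - K 0.
  apply: cvg_lim => //; apply: cvgB => //; exact: cvg_cst.
have -> : limn (fun n : nat => K 0 - K (- n%:Z)) = K 0 - 0.
  apply: cvg_lim => //; apply: cvgB => //; exact: cvg_cst.
by rewrite sub0r subr0 addNr.
Qed.
Section OneSided.
Variable R : realType.

Lemma size_sub_samelead (a b : {poly R}) :
  size a = size b -> lead_coef a = lead_coef b -> (size (a - b)%R <= (size a).-1)%N.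
Proof.
move=> sab lab; apply/leq_sizeP => j hj; rewrite coefB.
have [->|hne] := eqVneq j (size a).-1.
  by rewrite -/(lead_coef a) lab /lead_coef sab subrr.
have ha : (size a <= j)%N.
  by move: hj hne; case: (size a) => //= k; rewrite leq_eqVlt eq_sym => /orP[->|].
have hb : (size b <= j)%N by rewrite -sab.
by rewrite !nth_default // subrr.
Qed.

Lemma lead_coef_of (D : {poly R}) d : (size D <= d.+1)%N -> D`_d != 0 -> lead_coef D = D`_d.
Proof.
move=> sD nz; have : (d < size D)%N.
  by rewrite ltnNge; apply/negP => /leq_sizeP /(_ d (leqnn d)) h; rewrite h eqxx in nz.
move=> hd; rewrite lead_coefE; congr nth.
by move: hd sD; case: (size D) => //= k; rewrite ltnS => h1 h2; apply/eqP; rewrite eqn_leq h1 andbT -ltnS.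
Qed.

Lemma rising_shift (m : nat) (x : R) :
  (\prod_(j < m) (x + 1 + j.+1%:R)) * (x + 1) = (\prod_(j < m) (x + j.+1%:R)) * (x + m.+1%:R).
Proof.
elim: m => [|m IH]; first by rewrite !big_ord0 !mul1r.
rewrite big_ord_recr /= -mulrA [_ * (x + 1)]mulrC mulrA IH.
rewrite [in RHS]big_ord_recr /=.
rewrite (mulrS 1 m.+1).
ring.
Qed.

Lemma one_sided (tau : nat -> R) (A B : {poly R}) :
  (forall n, 0 <= tau n) ->
  (forall n : nat, A.[n%:R] * tau n.+1 = B.[n%:R] * tau n) ->
  size A = size B -> lead_coef A = lead_coef B -> 0 < lead_coef A ->
  (forall N, exists n, (N <= n)%N /\ tau n != 0) ->
  (forall P : {poly R}, (fun n : nat => P.[n%:R] * tau n) @ \oo --> 0) -> False.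
Proof.
move=> t0 rel sAB lAB lpos inf null.
have Anz : A != 0 by apply/eqP => A0; move: lpos; rewrite A0 lead_coef0 ltxx.
set l := lead_coef A in lAB lpos.
set d := (size A).-1.
have sA : size A = d.+1 by rewrite /d prednK // size_poly_gt0.
set E := B - A.
have sE : (size E <= d)%N.
  by have := @size_sub_samelead B A (esym sAB) (esym lAB); rewrite -sAB.
set e := (('X + 1) * E)`_d.
pose m := (Num.trunc (`|e| / l)).+1.
have hm : 0 < e + m%:R * l.
  have h1 : `|e| / l < m%:R by apply: truncnS_gt.
  have h2 : `|e| < m%:R * l by rewrite -ltr_pdivrMr.
  have h3 : - e <= `|e| by rewrite -normrN ler_norm.
  lra.
set D := ('X + (m.+1)%:R%:P) * B - ('X + 1) * A.
have DE : D = ('X + 1) * E + m%:R *: B.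
  rewrite /D /E -mul_polyC -(natr1 m) polyCD polyC1; ring.
have sD : (size D <= d.+1)%N.
  rewrite DE; apply: (leq_trans (size_polyD _ _)); rewrite geq_max; apply/andP; split.
    apply: (leq_trans (size_mul_leq _ _)).
    by rewrite -polyC1 size_XaddC.
  by apply: (leq_trans (size_scale_leq _ _)); rewrite -sAB sA.
have Bd : B`_d = l by rewrite lAB lead_coefE -sAB.
have Dd : D`_d = e + m%:R * l by rewrite DE coefD coefZ Bd.
have lD : lead_coef D = e + m%:R * l by rewrite -Dd; apply: lead_coef_of; rewrite // Dd gt_eqF.
have lDpos : 0 < lead_coef D by rewrite lD.
have [xD HD] := poly_pinfty_gt_lc lDpos.
have [xA HA] := poly_pinfty_gt_lc lpos.
pose N0 := (Num.trunc `|Num.max xD xA|).+1.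
have N0P n : (N0 <= n)%N -> xD <= n%:R /\ xA <= n%:R.
  move=> hn; have h1 : `|Num.max xD xA| < N0%:R by apply: truncnS_gt.
  have h2 : N0%:R <= n%:R :> R by rewrite ler_nat.
  have h3 : Num.max xD xA <= `|Num.max xD xA| by apply: ler_norm.
  have h4 : xD <= Num.max xD xA by rewrite le_max lexx.
  have h5 : xA <= Num.max xD xA by rewrite le_max lexx orbT.
  split; lra.
pose P : {poly R} := \prod_(j < m) ('X + (j.+1)%:R%:P).
have Pev (x : R) : P.[x] = \prod_(j < m) (x + j.+1%:R).
  by rewrite /P horner_prod; apply: eq_bigr => j _; rewrite !hornerE.
have Ppos (n : nat) : 0 < P.[n%:R].
  rewrite Pev; apply: prodr_gt0 => j _.
  by apply: (@lt_le_trans _ _ (j.+1%:R)); rewrite ?ltr0Sn // lerDr.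
pose s n := P.[n%:R] * tau n.
have mono n : (N0 <= n)%N -> s n <= s n.+1.
  move=> /N0P [hxD hxA].
  have An : 0 < A.[n%:R] by apply: (lt_le_trans lpos); apply: HA.
  have Dn : 0 < D.[n%:R] by apply: (lt_le_trans lDpos); apply: HD.
  have e1 : P.[n.+1%:R] * (n%:R + 1) = P.[n%:R] * (n%:R + m.+1%:R).
    by rewrite !Pev -natr1 rising_shift.
  have key : (s n.+1 - s n) * (A.[n%:R] * (n%:R + 1)) = P.[n%:R] * tau n * D.[n%:R].
    transitivity ((P.[n.+1%:R] * (n%:R + 1)) * (A.[n%:R] * tau n.+1)
                  - P.[n%:R] * tau n * (A.[n%:R] * (n%:R + 1))).
      by rewrite /s; ring.
    rewrite e1 rel /D -polyC1 hornerD hornerN !hornerM !hornerD hornerX !hornerC; ring.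
  have : 0 <= (s n.+1 - s n) * (A.[n%:R] * (n%:R + 1)).
    by rewrite key; apply: mulr_ge0; [apply: mulr_ge0; [apply: ltW|]|apply: ltW].
  by rewrite pmulr_lge0 ?subr_ge0 // mulr_gt0 // ltr_wpDl // ltr01.
have [n1 [hn1 tn1]] := inf N0.
have s1pos : 0 < s n1 by rewrite /s mulr_gt0 // lt_def tn1 t0.
have grow k : s n1 <= s (n1 + k)%N.
  elim: k => [|k IH]; first by rewrite addn0.
  by rewrite addnS; apply: (le_trans IH); apply: mono; apply: (leq_trans hn1); apply: leq_addr.
have [N _ HN] := cvgr0_norm_lt _ (null P) _ s1pos.
have := HN (n1 + N)%N (leq_addl _ _).
have := grow N; rewrite /s => g1 g2.
have : `|P.[(n1 + N)%N%:R] * tau (n1 + N)%N| = P.[(n1 + N)%N%:R] * tau (n1 + N)%N.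
  by rewrite ger0_norm //; apply: le_trans g1; apply: ltW.
move=> e3; rewrite e3 in g2; by move: (le_lt_trans g1 g2); rewrite ltxx.
Qed.

End OneSided.

Lemma one_sided' (R : realType) (tau : nat -> R) (A B : {poly R}) :
  (forall n, 0 <= tau n) ->
  (forall n : nat, A.[n%:R] * tau n.+1 = B.[n%:R] * tau n) ->
  size A = size B -> lead_coef A = lead_coef B -> A != 0 ->
  (forall N, exists n, (N <= n)%N /\ tau n != 0) ->
  (forall P : {poly R}, (fun n : nat => P.[n%:R] * tau n) @ \oo --> 0) -> False.
Proof.
move=> t0 rel sAB lAB Anz inf null.
have : lead_coef A != 0 by rewrite lead_coef_eq0.
rewrite neq_lt => /orP[lneg|lpos]; last exact: (one_sided t0 rel sAB lAB lpos inf null).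
apply: (@one_sided R tau (- A) (- B)) => //.
- by move=> n; rewrite !hornerN !mulNr rel.
- by rewrite !size_opp.
- by rewrite !lead_coefN lAB.
- by rewrite lead_coefN oppr_gt0.
Qed.
Section Main.
Variable R : realType.
Variables (rho : int -> R) (f g : {poly R}) (p : nat -> {poly R}).
Hypothesis rho_ge0 : forall x : int, 0 <= rho x.
Hypothesis rho_mom : finite_moments rho.
Hypothesis pearson : forall x : int,
     f.[x%:~R + 1] * rho (x + 1) - f.[x%:~R] * rho x = g.[x%:~R] * rho x.

Definition L (q : {poly R}) := zsum (fun x => q.[x%:~R] * rho x).

Lemma summ_poly q : zsummable (fun x : int => q.[x%:~R] * rho x).
Proof.
have -> : (fun x : int => q.[x%:~R] * rho x) =
          (fun x => \sum_(i < size q) q`_i * ((x%:~R)^+i * rho x)).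
  by apply/funext => x; rewrite horner_coef mulr_suml; apply: eq_bigr => i _; rewrite mulrA.
elim: (size q) => [|n IH].
  have -> : (fun x : int => \sum_(i < 0) q`_i * ((x%:~R)^+i * rho x)) = fun _ => 0.
    by apply/funext => x; rewrite big_ord0.
  exact: zsummable0.
have -> : (fun x : int => \sum_(i < n.+1) q`_i * ((x%:~R)^+i * rho x)) =
   fun x => \sum_(i < n) q`_i * ((x%:~R)^+i * rho x) + q`_n * ((x%:~R)^+n * rho x).
  by apply/funext => x; rewrite big_ord_recr.
by apply: zsummableD => //; apply: zsummableZ; apply: rho_mom.
Qed.

Lemma LD q r : L (q + r) = L q + L r.
Proof.
rewrite /L -zsumD; try exact: summ_poly.
by apply: zsum_ext => x; rewrite hornerD mulrDl.
Qed.

Lemma LZ a q : L (a *: q) = a * L q.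
Proof.
rewrite /L -zsumZ; last exact: summ_poly.
by apply: zsum_ext => x; rewrite hornerZ mulrA.
Qed.

Lemma L0 : L 0 = 0.
Proof. by rewrite /L -(@zsum0 R); apply: zsum_ext => x; rewrite horner0 mul0r. Qed.

Lemma LN q : L (- q) = - L q.
Proof. by rewrite -scaleN1r LZ mulN1r. Qed.

Lemma Lsum I (r : seq I) (P : pred I) (F : I -> {poly R}) :
  L (\sum_(i <- r | P i) F i) = \sum_(i <- r | P i) L (F i).
Proof. exact: (big_morph L LD L0). Qed.

Definition Ap (q : {poly R}) : {poly R} :=
  g * (q \Po ('X + 1%:P)) + f * ((q \Po ('X + 1%:P)) - (q \Po ('X - 1%:P))).

Lemma Al_Ap q x : Al f g (fun z => q.[z]) x = (Ap q).[x].
Proof.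
rewrite /Al /Ap !(hornerD, hornerM, hornerN, horner_comp, hornerX, hornerC).
ring.
Qed.

Lemma ApD q r : Ap (q + r) = Ap q + Ap r.
Proof. rewrite /Ap !comp_polyD; ring. Qed.

Lemma ApZ a q : Ap (a *: q) = a *: Ap q.
Proof. rewrite /Ap !comp_polyZ -!mul_polyC; ring. Qed.

Lemma Ap0 : Ap 0 = 0.
Proof. by rewrite /Ap !comp_poly0 subrr !mulr0 addr0. Qed.

Lemma Apsum I (r : seq I) (P : pred I) (F : I -> {poly R}) :
  Ap (\sum_(i <- r | P i) F i) = \sum_(i <- r | P i) Ap (F i).
Proof. exact: (big_morph Ap ApD Ap0). Qed.

Lemma skew q r : L (q * Ap r) + L (r * Ap q) = 0.
Proof.
rewrite -LD /L.
pose V := f * ((q \Po ('X - 1%:P)) * r + (r \Po ('X - 1%:P)) * q).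
pose K := fun x : int => V.[x%:~R] * rho x.
have -> : (fun x : int => (q * Ap r + r * Ap q).[x%:~R] * rho x) = fun x => K (x + 1) - K x.
  apply/funext => x; rewrite /K /V /Ap.
  have P' : f.[x%:~R + 1] * rho (x + 1) = g.[x%:~R] * rho x + f.[x%:~R] * rho x.
    by rewrite -pearson; ring.
  have E : forall A : R, f.[x%:~R + 1] * A * rho (x + 1) = (g.[x%:~R] * rho x + f.[x%:~R] * rho x) * A.
    by move=> A; rewrite -P'; ring.
  rewrite !(hornerD, hornerM, hornerN, horner_comp, hornerX, hornerC) intrD rmorph1 addrK E.
  ring.
have [h1 h2] := zsummable_null (summ_poly V).
exact: zsum_telescope.
Qed.

Hypothesis p_monic : forall n, p n \is monic.
Hypothesis p_size : forall n, size (p n) = n.+1.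
Hypothesis p_orth : forall m n, m <> n ->
     zsum (fun x => (p m).[x%:~R] * (p n).[x%:~R] * rho x) = 0.
Hypothesis h_pos : forall n, 0 < zsum (fun x => (p n).[x%:~R] ^+ 2 * rho x).

Lemma Lorth m n : m <> n -> L (p m * p n) = 0.
Proof. by move=> /p_orth <-; apply: zsum_ext => x; rewrite hornerM. Qed.

Lemma hpos n : 0 < L (p n * p n).
Proof.
have -> : L (p n * p n) = zsum (fun x => (p n).[x%:~R] ^+ 2 * rho x).
  by apply: zsum_ext => x; rewrite hornerM expr2.
exact: h_pos.
Qed.

Lemma pcoef n : (p n)`_n = 1.
Proof. by have := p_monic n; rewrite monicE lead_coefE p_size => /eqP. Qed.

Lemma expand n : forall q : {poly R}, (size q <= n)%N ->
  q = \sum_(k < n) (L (p k * q) / L (p k * p k)) *: p k.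
Proof.
elim: n => [|n IH] q sq.
  by move: sq; rewrite leqn0 size_poly_eq0 => /eqP ->; rewrite big_ord0.
have orthn : forall q' : {poly R}, (size q' <= n)%N -> L (p n * q') = 0.
  move=> q' /IH ->; rewrite mulr_sumr Lsum; apply: big1 => k _.
  rewrite -scalerAr LZ (@Lorth n k) ?mulr0 //.
  by move=> e; have := ltn_ord k; rewrite -e ltnn.
pose r := q - q`_n *: p n.
have sr : (size r <= n)%N.
  apply/leq_sizeP => j hj; rewrite /r coefB coefZ.
  have [->|hne] := eqVneq j n; first by rewrite pcoef mulr1 subrr.
  have hj' : (n < j)%N by rewrite ltn_neqAle eq_sym hne hj.
  have z1 : q`_j = 0 by rewrite nth_default // (leq_trans sq).
  have z2 : (p n)`_j = 0 by rewrite nth_default // p_size.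
  by rewrite z1 z2 mulr0 subrr.
have qr : q = q`_n *: p n + r by rewrite /r addrC subrK.
rewrite big_ord_recr /=.
have Lq : forall k, L (p k * q) = q`_n * L (p k * p n) + L (p k * r).
  by move=> k; rewrite {1}qr mulrDr LD -scalerAr LZ.
rewrite Lq (orthn r sr) [_ + 0]addr0 mulfK; last by rewrite gt_eqF // hpos.
rewrite {1}qr addrC; congr (_ + _).
rewrite {1}(IH r sr); apply: eq_bigr => k _.
by rewrite Lq (@Lorth k n) ?mulr0 ?add0r //; move=> e; have := ltn_ord k; rewrite e ltnn.
Qed.

Lemma orth_small m n (q : {poly R}) : (n <= m)%N -> (size q <= n)%N -> L (p m * q) = 0.
Proof.
move=> nm /expand ->; rewrite mulr_sumr Lsum; apply: big1 => k _.
rewrite -scalerAr LZ (@Lorth m k) ?mulr0 //.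
by move=> e; have := ltn_ord k; rewrite -e ltnNge nm.
Qed.


Hypothesis deg_f : (size f <= 3)%N.
Hypothesis deg_g : (size g <= 2)%N.

Lemma size_shift (q : {poly R}) c : size (q \Po ('X + c%:P)) = size q.
Proof. by rewrite size_comp_poly2 // size_XaddC. Qed.

Lemma lead_shift (q : {poly R}) c : lead_coef (q \Po ('X + c%:P)) = lead_coef q.
Proof. by rewrite lead_coef_comp ?size_XaddC // lead_coefXaddC expr1n mulr1. Qed.

Lemma size_diff (q : {poly R}) :
  (size ((q \Po ('X + 1%:P)) - (q \Po ('X - 1%:P)))%R <= (size q).-1)%N.
Proof.
have e : 'X - 1%:P = 'X + (-1)%:P :> {poly R} by rewrite polyCN.
rewrite e; have := @size_sub_samelead _ (q \Po ('X + 1%:P)) (q \Po ('X + (-1)%:P)).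
by rewrite !size_shift !lead_shift; apply.
Qed.

Lemma size_Ap q : (size (Ap q) <= (size q).+1)%N.
Proof.
have [->|qnz] := eqVneq q 0; first by rewrite Ap0 size_poly0.
have sq : (0 < size q)%N by rewrite size_poly_gt0.
rewrite /Ap; apply: (leq_trans (size_polyD _ _)); rewrite geq_max; apply/andP; split.
  apply: (leq_trans (size_mul_leq _ _)); rewrite size_shift.
  by move: deg_g sq; lia.
apply: (leq_trans (size_mul_leq _ _)).
by have := size_diff q; move: deg_f sq; lia.
Qed.

Lemma Lskew_self q : L (q * Ap q) = 0.
Proof. have := skew q q; lra. Qed.

Lemma Ap_rec n : Ap (p n) =
  (L (p n.+1 * Ap (p n)) / L (p n.+1 * p n.+1)) *: p n.+1 +
  (if n is n'.+1 then (L (p n' * Ap (p n)) / L (p n' * p n')) *: p n' else 0).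
Proof.
rewrite {1}(@expand n.+2 (Ap (p n))); last by have := size_Ap (p n); rewrite p_size.
rewrite big_ord_recr big_ord_recr /= Lskew_self mul0r scale0r addr0 addrC; congr (_ + _).
case: n => [|n]; first by rewrite big_ord0.
rewrite big_ord_recr /= big1 ?add0r // => k _.
have := skew (p k) (p n.+1).
rewrite (@orth_small n.+1 k.+2 (Ap (p k))) ?addr0.
- by move=> ->; rewrite mul0r scale0r.
- by have := ltn_ord k.
- by have := size_Ap (p k); rewrite p_size.
Qed.


Lemma p0 : p 0 = 1.
Proof.
by rewrite [p 0]size1_polyC ?p_size // pcoef.
Qed.

Lemma inf_supp (M : nat) : exists x : int, (M < absz x)%N /\ rho x != 0.
Proof.
apply: contrapT => H.
have Z : forall x : int, (M < absz x)%N -> rho x = 0.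
  move=> x hx; apply/eqP; apply: contrapT => nz; apply: H; exists x; split => //.
  exact/negP.
pose n := (M.*2).+1.
pose pi : {poly R} := \prod_(j <- iota 0 n) ('X - ((j%:Z - M%:Z)%:~R)%:P).
have pim : pi \is monic by apply: monic_prod_XsubC.
have pis : size pi = n.+1 by rewrite size_prod_XsubC size_iota.
have root0 : forall x : int, (absz x <= M)%N -> pi.[x%:~R] = 0.
  move=> x hx; rewrite horner_prod.
  have hxM : (0 <= x + M%:Z)%R.
    by move: hx; case: x => k /=; rewrite ?NegzE; lia.
  have j0in : absz (x + M%:Z) \in iota 0 n.
    by rewrite mem_iota /= add0n /n; move: hx hxM; case: x => k /=; rewrite ?NegzE; lia.
  rewrite (big_rem _ j0in) /= gez0_abs // addrK !hornerE subrr mul0r //.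
have Lz : L (p n * pi) = 0.
  rewrite /L -(@zsum0 R); apply: zsum_ext => x; rewrite hornerM.
  case: (leqP (absz x) M) => hx; first by rewrite root0 // mulr0 mul0r.
  by rewrite Z // mulr0.
have : L (p n * pi) = L (p n * p n).
  rewrite -[pi](subrK (p n)) mulrDr LD (@orth_small n n) ?add0r //.
  have := @size_sub_samelead _ pi (p n); rewrite pis p_size; apply => //.
  by rewrite (eqP pim) (eqP (p_monic n)).
by rewrite Lz => /esym h; have := hpos n; rewrite h ltxx.
Qed.


Lemma same_lead_false (A B : {poly R}) :
  (forall x : int, A.[x%:~R] * rho (x + 1) = B.[x%:~R] * rho x) ->
  size A = size B -> lead_coef A = lead_coef B -> A != 0 -> False.
Proof.
move=> rel sAB lAB Anz.
have [rt|lt] : (forall N : nat, exists n : nat, (N <= n)%N /\ rho n%:Z != 0) \/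
               (forall N : nat, exists n : nat, (N <= n)%N /\ rho (- n%:Z) != 0).
  case: (pselect (forall N : nat, exists n : nat, (N <= n)%N /\ rho n%:Z != 0)) => h; first by left.
  right => N.
  have [N1 HN1] : exists N1, forall n : nat, (N1 <= n)%N -> rho n%:Z = 0.
    apply: contrapT => h2; apply: h => N'; apply: contrapT => h3; apply: h2.
    exists N' => n hn; apply/eqP; apply: contrapT => nz; apply: h3; exists n; split => //.
    exact/negP.
  have [x [hx nz]] := inf_supp (maxn N N1).
  move: hx nz; case: x => k /= hx nz.
    by move: nz; rewrite HN1 ?eqxx //; move: hx; rewrite gtn_max => /andP[_ /ltnW].
  exists k.+1; split; first by move: hx; rewrite gtn_max => /andP[/ltnW].
  by rewrite -NegzE.
- apply: (@one_sided' R (fun n => rho n%:Z) A B) => //.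
  + move=> n; have := rel n%:Z; rewrite pmulrn.
    by have -> : n%:Z + 1 = n.+1%:Z by rewrite -addn1 PoszD.
  + move=> P; have [h1 _] := zsummable_null (summ_poly P).
    have e : (fun n : nat => P.[(n%:Z)%:~R] * rho n%:Z) = (fun n => P.[n%:R] * rho n%:Z).
      by apply/funext => n; rewrite pmulrn.
    by rewrite e in h1.
- have s2 : size (-'X - 1 : {poly R}) = 2 by rewrite -opprD size_opp -polyC1 size_XaddC.
  apply: (@one_sided' R (fun n => rho (- n%:Z)) (B \Po (-'X - 1)) (A \Po (-'X - 1))) => //.
  + move=> n; have := rel (- (n.+1)%:Z).
    have -> : - (n.+1)%:Z + 1 = - n%:Z by rewrite -addn1 PoszD opprD addrNK.
    rewrite !horner_comp -polyC1 !(hornerD, hornerN, hornerX, hornerC) intrN -!pmulrn -natr1 opprD.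
    by move=> ->.
  + by rewrite !size_comp_poly2.
  + by rewrite !lead_coef_comp ?s2 // sAB lAB.
  + by rewrite -size_poly_gt0 size_comp_poly2 // -sAB size_poly_gt0.
  + move=> P; have [_ h2] := zsummable_null (summ_poly (P \Po (-'X))).
    have e : (fun n : nat => (P \Po (-'X)).[(- n%:Z)%:~R] * rho (- n%:Z)) =
             (fun n => P.[n%:R] * rho (- n%:Z)).
      by apply/funext => n; rewrite horner_comp hornerN hornerX intrN opprK pmulrn.
    by rewrite e in h2.
Qed.


Lemma rel_shift x : (f \Po ('X + 1%:P)).[x%:~R] * rho (x + 1) = (f + g).[x%:~R] * rho x.
Proof.
rewrite horner_comp !(hornerD, hornerX, hornerC).
have := pearson x; lra.
Qed.

Lemma f_small : f != 0 -> (size f <= 2)%N.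
Proof.
move=> fnz; case: (leqP (size f) 2) => // hf.
exfalso; apply: (@same_lead_false (f \Po ('X + 1%:P)) (f + g)).
- exact: rel_shift.
- by rewrite size_shift size_addl //; apply: leq_ltn_trans hf.
- by rewrite lead_shift lead_coefDl //; apply: leq_ltn_trans hf.
- by rewrite -size_poly_gt0 size_shift size_poly_gt0.
Qed.

Lemma g1_nz : f != 0 -> g`_1 != 0.
Proof.
move=> fnz; apply/negP => /eqP g1.
have sg : (size g <= 1)%N.
  apply/leq_sizeP => j hj; case: j hj => [//|[|j]] _; first by rewrite g1.
  by rewrite nth_default // (leq_trans deg_g).
have gE : g = (g`_0)%:P by apply: size1_polyC.
have Ap1 : Ap 1 = g by rewrite /Ap -polyC1 !comp_polyC subrr mulr0 addr0 mulr1.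
have := Lskew_self 1; rewrite Ap1 mul1r {1}gE -[(g`_0)%:P]mulr1 mul_polyC LZ.
have h1 : L 1 != 0 by have := hpos 0; rewrite p0 mulr1 => /gt_eqF ->.
move/eqP; rewrite mulf_eq0 (negbTE h1) orbF => /eqP g0.
have gz : g = 0 by rewrite gE g0.
apply: (@same_lead_false (f \Po ('X + 1%:P)) f).
- by move=> x; have := rel_shift x; rewrite gz addr0.
- by rewrite size_shift.
- by rewrite lead_shift.
- by rewrite -size_poly_gt0 size_shift size_poly_gt0.
Qed.

Lemma Lcoef : (size f <= 2)%N -> forall n,
  L (p n.+1 * Ap (p n)) = g`_1 * L (p n.+1 * p n.+1).
Proof.
move=> hf n.
have gE : g = g`_1 *: 'X + (g`_0)%:P.
  apply/polyP => i; rewrite coefD coefZ coefX coefC.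
  case: i => [|[|i]] /=; rewrite ?mulr0 ?mulr1 ?add0r ?addr0 //.
  by rewrite nth_default // (leq_trans deg_g).
set s := p n \Po ('X + 1%:P).
have sE : Ap (p n) - g`_1 *: p n.+1 =
   g`_1 *: (s * 'X - p n.+1) + g`_0 *: s + f * (s - (p n \Po ('X - 1%:P))).
  rewrite /Ap [in g * _]gE -/s -!mul_polyC; ring.
have snz : s != 0 by rewrite -size_poly_gt0 size_shift p_size.
have ss : size (s * 'X) = n.+2 by rewrite size_mulX // size_shift p_size.
have ls : lead_coef (s * 'X) = lead_coef (p n.+1).
  by rewrite lead_coefMX lead_shift (eqP (p_monic n)) (eqP (p_monic n.+1)).
have srem : (size (Ap (p n) - g`_1 *: p n.+1)%R <= n.+1)%N.
  rewrite sE; apply: (leq_trans (size_polyD _ _)); rewrite geq_max; apply/andP; split.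
    apply: (leq_trans (size_polyD _ _)); rewrite geq_max; apply/andP; split.
      apply: (leq_trans (size_scale_leq _ _)).
      by have := size_sub_samelead (etrans ss (esym (p_size n.+1))) ls; rewrite ss.
    by apply: (leq_trans (size_scale_leq _ _)); rewrite size_shift p_size.
  apply: (leq_trans (size_mul_leq _ _)).
  have hd := size_diff (p n); rewrite p_size /= in hd.
  rewrite -subn1; apply: (@leq_trans ((2 + n) - 1)); last by rewrite subn1.
  by apply: leq_sub2r; apply: leq_add.
rewrite -[Ap (p n)](subrK (g`_1 *: p n.+1)) mulrDr LD (@orth_small n.+1 n.+1) // add0r.
by rewrite -scalerAr LZ.
Qed.


Hypothesis pf_nz : forall n : nat, (0 < n)%N ->
     pfaffian (skew_moment_mx (fun x => f.[x%:~R + 1] * rho (x + 1)) n) != 0.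

Lemma f_nz : f != 0.
Proof.
apply/negP => /eqP f0; have := @pf_nz 1 (ltn0Sn 0).
have -> : skew_moment_mx (fun x => f.[x%:~R + 1] * rho (x + 1)) 1 = 0.
  apply/matrixP => i j; rewrite !mxE -(@zsum0 R); apply: zsum_ext => z.
  by rewrite f0 horner0 mul0r mulr0.
rewrite /pfaffian big1 ?mulr0 ?eqxx // => s _.
by rewrite big_ord1 mxE mulr0.
Qed.

Lemma cval n : L (p n.+1 * Ap (p n)) = g`_1 * L (p n.+1 * p n.+1).
Proof. exact: (Lcoef (f_small f_nz)). Qed.

Lemma c_nz n : L (p n.+1 * Ap (p n)) != 0.
Proof. by rewrite cval mulf_neq0 ?g1_nz ?f_nz // gt_eqF // hpos. Qed.


Lemma ApN q : Ap (- q) = - Ap q.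
Proof. by rewrite -scaleN1r ApZ scaleN1r. Qed.

Lemma main_result :
  let h n := zsum (fun x => (p n).[x%:~R] ^+ 2 * rho x) in
  let c n := - zsum (fun x => (p n.+1).[x%:~R] *
                               Al f g (fun z => (p n).[z]) x%:~R * rho x) in
  let Q n : {poly R} :=
    if odd n then p n
    else \sum_(0 <= l < (n./2).+1)
           (\prod_(l <= j < n./2) (c (j.*2.+1) / c (j.*2))) *: p (l.*2) in
  let u n := c (n.*2) in
  let S N (x y : R) := \sum_(0 <= i < N)
       (u i)^-1 * ((Q (i.*2)).[x] * (Q (i.*2.+1)).[y]
                   - (Q (i.*2)).[y] * (Q (i.*2.+1)).[x]) in
  forall N : nat, (1 <= N)%N ->
  let t := - (c (N.*2.-1) / c (N.*2 - 2)%N) in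
  forall x y : R,
    \sum_(0 <= m < N) (p (m.*2)).[x] * (p (m.*2)).[y] / h (m.*2)
    + \sum_(0 <= m < N) (p (m.*2.+1)).[x] * (p (m.*2.+1)).[y] / h (m.*2.+1)
    = Al f g (fun z => S N x z) y - t / h (N.*2) * (p (N.*2)).[y] * (Q (N.*2 - 2)%N).[x].
Proof.
move=> h c Q u S N hN t x y.
have hL n : h n = L (p n * p n).
  by rewrite /h; apply: zsum_ext => z; rewrite hornerM expr2.
have Lc n : L (p n.+1 * Ap (p n)) = - c n.
  rewrite /c opprK; apply: zsum_ext => z; by rewrite hornerM Al_Ap.
have hnz n : h n != 0 by rewrite hL gt_eqF // hpos.
have cnz n : c n != 0 by rewrite -oppr_eq0 -Lc c_nz.
have Arec n : Ap (p n) = (- c n / h n.+1) *: p n.+1 +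
    (if n is n'.+1 then (c n' / h n') *: p n' else 0).
  rewrite {1}Ap_rec Lc hL; congr (_ + _); case: n => [|n] //.
  rewrite hL; congr (_ / _ *: _).
  by have := skew (p n) (p n.+1); rewrite Lc; lra.
have Qo i : Q i.*2.+1 = p i.*2.+1 by rewrite /Q /= odd_double.
have Q0 : Q 0 = p 0.
  by rewrite /Q /= big_nat1 big_geq // scale1r.
have Qrec i : Q i.*2.+2 = p i.*2.+2 + (c i.*2.+1 / c i.*2) *: Q i.*2.
  rewrite /Q /= !odd_double /= -doubleS !doubleK.
  rewrite big_nat_recr //= [\prod_(i.+1 <= j < i.+1) _]big_geq // scale1r addrC; congr (_ + _).

  rewrite scaler_sumr; apply: eq_big_nat => l /andP[_ hl].
  have hl' : (l <= i)%N by [].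
  by rewrite big_nat_recr //= scalerA mulrC.
have AQ i : Ap (Q i.*2) = (- c i.*2 / h i.*2.+1) *: p i.*2.+1.
  elim: i => [|i IH]; first by rewrite Q0 Arec addr0.
  rewrite doubleS Qrec ApD ApZ IH Arec -addrA.
  rewrite [X in _ + X](_ : _ = 0) ?addr0 //.
  rewrite scalerA -scalerDl; apply/eqP; rewrite scaler_eq0; apply/orP; left.
  apply/eqP; field.
  by rewrite hnz cnz.
pose Sp : {poly R} := \sum_(0 <= i < N)
   (u i)^-1 *: ((Q i.*2).[x] *: Q i.*2.+1 - (Q i.*2.+1).[x] *: Q i.*2).
have SE : (fun z => S N x z) = (fun z => Sp.[z]).
  apply/funext => z; rewrite /S /Sp horner_sum; apply: eq_bigr => i _.
  rewrite !(hornerZ, hornerD, hornerN); ring.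
rewrite SE Al_Ap /Sp Apsum horner_sum.
pose E i := (p i.*2).[x] * (p i.*2).[y] / h i.*2.
pose O i := (p i.*2.+1).[x] * (p i.*2.+1).[y] / h i.*2.+1.
pose W i := ((p i.*2).[x] - (Q i.*2).[x]) * (p i.*2).[y] / h i.*2.
have term i : (Ap ((u i)^-1 *: ((Q i.*2).[x] *: Q i.*2.+1 - (Q i.*2.+1).[x] *: Q i.*2))).[y]
    = E i + O i + (W i.+1 - W i).
  rewrite ApZ ApD ApN !ApZ Qo AQ Arec /E /O /W doubleS Qrec /u /=.
  rewrite !(hornerZ, hornerD, hornerN).
  field.
  by apply/and4P; split; [exact: hnz|exact: hnz|exact: (cnz i.*2)|exact: hnz].
rewrite (eq_bigr _ (fun i _ => term i)) !big_split /= sumrN -sumrB telescope_sumr //.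
have W0 : W 0%N = 0 by rewrite /W Q0 subrr !mul0r.
rewrite W0 subr0.
rewrite /t; clear SE Sp t; case: N hN => [//|N'] _.
rewrite /W doubleS Qrec /=.
have -> : (N'.*2.+2 - 2 = N'.*2)%N by rewrite subSS subSS subn0.
rewrite !(hornerD, hornerZ) /E /O.
field.
by apply/andP; split; [exact: hnz|exact: (cnz N'.*2)].
Qed.

End Main.


Unset Implicit Arguments.
Local Close Scope classical_set_scope.

Theorem mainTheorem5 (R : realType) (rho : int -> R) (f g : {poly R})
  (p : nat -> {poly R})
  (rho_ge0 : forall x : int, 0 <= rho x)
  (rho_mom : finite_moments rho)
  (deg_f : (size f <= 3)%N) (deg_g : (size g <= 2)%N)
  (pearson : forall x : int,
     f.[x%:~R + 1] * rho (x + 1) - f.[x%:~R] * rho x = g.[x%:~R] * rho x)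
  (bd_left : forall a : int, is_left_endpoint rho a -> f.[a%:~R] * rho a = 0)
  (bd_right : forall b : int, is_right_endpoint rho b -> f.[b%:~R] * rho b = 0)
  (p_monic : forall n, p n \is monic)
  (p_size : forall n, size (p n) = n.+1)
  (p_orth : forall m n, m <> n ->
     zsum (fun x => (p m).[x%:~R] * (p n).[x%:~R] * rho x) = 0)
  (h_pos : forall n, 0 < zsum (fun x => (p n).[x%:~R] ^+ 2 * rho x))
  (pf_nz : forall n : nat, (0 < n)%N ->
     pfaffian (skew_moment_mx (fun x => f.[x%:~R + 1] * rho (x + 1)) n) != 0) :
  let h n := zsum (fun x => (p n).[x%:~R] ^+ 2 * rho x) in
  let c n := - zsum (fun x => (p n.+1).[x%:~R] *
                               Al f g (fun z => (p n).[z]) x%:~R * rho x) in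
  let Q n : {poly R} :=
    if odd n then p n
    else \sum_(0 <= l < (n./2).+1)
           (\prod_(l <= j < n./2) (c (j.*2.+1) / c (j.*2))) *: p (l.*2) in
  let u n := c (n.*2) in
  let S N (x y : R) := \sum_(0 <= i < N)
       (u i)^-1 * ((Q (i.*2)).[x] * (Q (i.*2.+1)).[y]
                   - (Q (i.*2)).[y] * (Q (i.*2.+1)).[x]) in
  forall N : nat, (1 <= N)%N ->
  let t := - (c (N.*2.-1) / c (N.*2 - 2)%N) in
  forall x y : R,
    \sum_(0 <= m < N) (p (m.*2)).[x] * (p (m.*2)).[y] / h (m.*2)
    + \sum_(0 <= m < N) (p (m.*2.+1)).[x] * (p (m.*2.+1)).[y] / h (m.*2.+1)
    = Al f g (fun z => S N x z) y - t / h (N.*2) * (p (N.*2)).[y] * (Q (N.*2 - 2)%N).[x].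
Proof.
exact: (@main_result R rho f g p rho_ge0 rho_mom pearson p_monic p_size p_orth
          h_pos deg_f deg_g pf_nz).
Qed.
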